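(* Let $\alpha \in [0,1)$. For every $k \in \{1,\dots,m-2\}$, with $\mathbf{S}_k = (S_k,\dots,S_k)$, $$S_{\min}\sqrt[n]{1-\alpha} + S_k\left(1 - \sqrt[n]{1-\alpha}\right) \le B_{T_h}^*(\mathbf{S}_k) \le S_{\min}\sqrt[n]{1-\alpha} + S_{k+1}\left(1 - \sqrt[n]{1-\alpha}\right).$$
   Context: Fix integers $m \ge 3$, $n \ge 1$ and reals $S_{\min} < S_{\max}$; $S = \{S_0,\dots,S_{m-1}\}$ with $S_k = S_{\min} + k\frac{S_{\max}-S_{\min}}{m-1}$. $\mathcal{F}$ is the set of probability distributions on $S$, identified with the probability simplex in $\mathbb{R}^m$ with the Euclidean topology; $E[F]$ is the mean. $\Omega$ is the set of samples of size $n$ from $S$, identified with their sorted versions $x_{(1)} \le \dots \le x_{(n)}$. $P_F[\Omega']$ is the probability that the sorted sample of $n$ i.i.d. draws from $F$ lies in $\Omega' \subseteq \Omega$; $\mathcal{G}(\Omega',\alpha) = \{F : P_F[\Omega'] > \alpha\}$ and $\mathcal{F}(\Omega',\alpha)$ is its closure. The high lexicographic order $T_h$: $\mathbf{x} \le_{T_h} \mathbf{y}$ iff $\mathbf{x}=\mathbf{y}$ or at the largest index $j$ with $x_{(j)} \ne y_{(j)}$ we have $x_{(j)} < y_{(j)}$. $\Omega(\mathbf{x},T_h) = \{\mathbf{y} : \mathbf{x} \le_{T_h} \mathbf{y}\}$ and $B_{T_h}^*(\mathbf{x}) = \min\{E[F] : F \in \mathcal{F}(\Omega(\mathbf{x},T_h),\alpha)\}$.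 *)

(* Defs.v *)
From HB Require Import structures.
From mathcomp Require Import all_boot all_order all_algebra.
From mathcomp Require Import all_classical all_reals all_analysis.
Set Implicit Arguments. Unset Strict Implicit. Unset Printing Implicit Defensive.
Import Order.TTheory GRing.Theory Num.Theory.
Import numFieldNormedType.Exports.
Local Open Scope classical_set_scope.
Local Open Scope ring_scope.

Section Defs.
Variable R : realType.
Variables (m n : nat) (Smin Smax : R).

Definition Sval (k : nat) : R :=
  Smin + k%:R * ((Smax - Smin) / (m - 1)%:R).

(* distributions on S, identified with the probability simplex in R^m *)
Definition simplex : set 'rV[R]_m :=
  [set F | (forall i, 0 <= F 0 i) /\ \sum_(i < m) F 0 i = 1].

Definition mean (F : 'rV[R]_m) : R := \sum_(i < m) F 0 i * Sval i.

Definition sorted_sample (d : {ffun 'I_n -> 'I_m}) : seq R :=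
  sort <=%R [seq Sval (d j) | j <- enum 'I_n].

(* P_F[Om] : probability that the sorted sample of n i.i.d. draws from F
   lies in Om *)
Definition Prob (F : 'rV[R]_m) (Om : set (seq R)) : R :=
  \sum_(d : {ffun 'I_n -> 'I_m} | `[< Om (sorted_sample d) >])
     \prod_(j < n) F 0 (d j).

Definition leTh (x y : seq R) : Prop :=
  x = y \/
  exists j, (j < n)%N /\ nth 0 x j < nth 0 y j /\
    (forall j', (j < j')%N -> (j' < n)%N -> nth 0 x j' = nth 0 y j').

Definition OmegaTh (x : seq R) : set (seq R) := [set y | leTh x y].

Definition Gset (Om : set (seq R)) (alpha : R) : set 'rV[R]_m :=
  [set F | simplex F /\ alpha < Prob F Om].
Definition Fset (Om : set (seq R)) (alpha : R) : set 'rV[R]_m :=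
  closure (Gset Om alpha).

Definition is_min_mean (Om : set (seq R)) (alpha b : R) : Prop :=
  (exists F, Fset Om alpha F /\ mean F = b) /\
  (forall F, Fset Om alpha F -> b <= mean F).

End Defs.

(* Main.v *)
Require Import Defs.
From HB Require Import structures.
From mathcomp Require Import all_boot all_order all_algebra.
From mathcomp Require Import all_classical all_reals all_analysis.
From mathcomp Require Import lra zify.
Import Order.TTheory GRing.Theory Num.Theory.
Import numFieldNormedType.Exports.
Local Open Scope classical_set_scope.
Local Open Scope ring_scope.

Section Aux.
Variable R : realType.
Variables (m n : nat) (Smin Smax : R).

Lemma sum_forall (F : 'rV[R]_m) (P : pred 'I_m) :
  \sum_(d : {ffun 'I_n -> 'I_m}) (if [forall j, P (d j)] then \prod_(j < n) F 0 (d j) else 0)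
  = (\sum_(i | P i) F 0 i) ^+ n.
Proof.
rewrite -[n in RHS]card_ord -prodr_const.
under [RHS]eq_bigr do rewrite big_mkcond.
rewrite (bigA_distr_bigA (fun (j : 'I_n) (i : 'I_m) => if P i then F 0 i else 0)) /=.
apply: eq_bigr => d _.
case: forallP => [H|H].
  by apply: eq_bigr => j _; rewrite H.
have [j Hj] : exists j, ~~ P (d j).
  by apply/existsP; rewrite -negb_forall; apply/negP => /forallP.
by rewrite (bigD1 j) //= (negbTE Hj) mul0r.
Qed.

Lemma sum_total (F : 'rV[R]_m) : simplex F ->
  \sum_(d : {ffun 'I_n -> 'I_m}) \prod_(j < n) F 0 (d j) = 1.
Proof.
move=> [_ H1].
transitivity (\sum_(d : {ffun 'I_n -> 'I_m}) (if [forall j, predT (d j)] then \prod_(j < n) F 0 (d j) else 0)).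
  by apply: eq_bigr => d _; rewrite (_ : [forall j, _] = true) //; apply/forallP.
by rewrite sum_forall H1 expr1n.
Qed.

Lemma prod_ge0 (F : 'rV[R]_m) (d : {ffun 'I_n -> 'I_m}) : simplex F ->
  0 <= \prod_(j < n) F 0 (d j).
Proof. by move=> [H _]; apply: prodr_ge0 => j _. Qed.

Lemma prob_ub (F : 'rV[R]_m) (Om : set (seq R)) (Q : pred 'I_m) : simplex F ->
  (forall d : {ffun 'I_n -> 'I_m}, [forall j, Q (d j)] -> ~ Om (@sorted_sample R m n Smin Smax d)) ->
  @Prob R m n Smin Smax F Om <= 1 - (\sum_(i | Q i) F 0 i) ^+ n.
Proof.
move=> sF HQ.
rewrite /Prob big_mkcond -[X in _ <= X - _](@sum_total F sF) -sum_forall -sumrB.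
apply: ler_sum => d _.
case: asboolP => HO; case: ifP => HQd.
- by case: (HQ d HQd HO).
- by rewrite subr0.
- by rewrite subrr.
- by rewrite subr0 (@prod_ge0 F d sF).
Qed.

Lemma prob_lb (F : 'rV[R]_m) (Om : set (seq R)) (Q : pred 'I_m) : simplex F ->
  (forall d : {ffun 'I_n -> 'I_m}, ~~ [forall j, Q (d j)] -> Om (@sorted_sample R m n Smin Smax d)) ->
  1 - (\sum_(i | Q i) F 0 i) ^+ n <= @Prob R m n Smin Smax F Om.
Proof.
move=> sF HQ.
rewrite /Prob -[X in X - _ <= _](@sum_total F sF) -sum_forall -sumrB [X in _ <= X]big_mkcond.
apply: ler_sum => d _.
case: asboolP => HO; case: ifP => HQd.
- by rewrite subrr (@prod_ge0 F d sF).
- by rewrite subr0.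
- by rewrite subrr.
- by case: HO; apply: HQ; rewrite HQd.
Qed.

Hypothesis m2 : (1 < m)%N.
Hypothesis Sminmax : Smin < Smax.

Local Notation S := (@Sval R m Smin Smax).

Lemma Sval_lt i j : (i < j)%N -> S i < S j.
Proof.
move=> ij; rewrite /Sval ltrD2l ltr_pM2r ?ltr_nat //.
apply: divr_gt0; first by rewrite subr_gt0.
by rewrite ltr0n subn_gt0.
Qed.

Lemma Sval_le i j : (i <= j)%N -> S i <= S j.
Proof.
by rewrite leq_eqVlt => /orP [/eqP -> // | /Sval_lt /ltW].
Qed.

Lemma size_ss (d : {ffun 'I_n -> 'I_m}) : size (@sorted_sample R m n Smin Smax d) = n.
Proof. by rewrite /sorted_sample size_sort size_map size_enum_ord. Qed.

Lemma mem_ss (d : {ffun 'I_n -> 'I_m}) x : x \in @sorted_sample R m n Smin Smax d -> exists j, x = S (d j).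
Proof.
rewrite /sorted_sample mem_sort => /mapP [j _ ->]; by exists j.
Qed.

Lemma mem_ss2 (d : {ffun 'I_n -> 'I_m}) j : S (d j) \in @sorted_sample R m n Smin Smax d.
Proof.
by rewrite /sorted_sample mem_sort; apply/mapP; exists j => //; rewrite mem_enum.
Qed.

Lemma notOm k (d : {ffun 'I_n -> 'I_m}) : (0 < n)%N -> [forall j, (d j < k)%N] ->
  ~ OmegaTh n (nseq n (S k)) (@sorted_sample R m n Smin Smax d).
Proof.
move=> n0 /forallP Hd [Heq | [j [jn [Hlt _]]]].
  have : S k \in nseq n (S k) by rewrite mem_nseq n0 eqxx.
  rewrite Heq => /mem_ss [j Hj].
  by have := Sval_lt _ _ (Hd j); rewrite -Hj ltxx.
move: Hlt; rewrite nth_nseq jn.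
have : nth 0 (@sorted_sample R m n Smin Smax d) j \in @sorted_sample R m n Smin Smax d.
  by apply: mem_nth; rewrite size_ss.
move=> /mem_ss [j' ->].
by move=> H; have := lt_trans H (Sval_lt _ _ (Hd j')); rewrite ltxx.
Qed.

Lemma inOm k (d : {ffun 'I_n -> 'I_m}) : (0 < n)%N -> ~~ [forall j, (d j <= k)%N] ->
  OmegaTh n (nseq n (S k)) (@sorted_sample R m n Smin Smax d).
Proof.
move=> n0; rewrite negb_forall => /existsP [j0]; rewrite -ltnNge => Hj0.
right; exists n.-1; split; first by rewrite prednK.
split; last first. move=> j' H1 H2; exfalso; rewrite -(prednK n0) ltnS in H2; by have := leq_trans H1 H2; rewrite ltnn.
rewrite nth_nseq (prednK n0) leqnn.
set y := @sorted_sample R m n Smin Smax d.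
have yS : sorted <=%R y by apply: sort_sorted; exact: le_total.
have Hin := mem_ss2 d j0.
apply: (lt_le_trans (Sval_lt _ _ Hj0)).
rewrite -(nth_index 0 Hin).
apply: (sorted_leq_nth le_trans lexx 0 yS).
- by rewrite inE index_mem.
- by rewrite inE size_ss -(prednK n0) leqnn.
- by rewrite -ltnS (prednK n0); move: (Hin); rewrite -index_mem size_ss.
Qed.

Lemma Sval0 : S 0 = Smin.
Proof. by rewrite /Sval mul0r addr0. Qed.

Lemma mean_cont : continuous (@mean R m Smin Smax).
Proof.
rewrite /mean.
suff H : forall s : seq 'I_m, continuous (fun F : 'rV[R]_m => \sum_(i <- s) F 0 i * S i).
  exact: H.
elim=> [|i s IH].
  by under eq_fun do rewrite big_nil; exact: cst_continuous.
move=> x.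
have -> : (fun F : 'rV[R]_m => \sum_(j <- i :: s) F 0 j * S j) = (fun F : 'rV[R]_m => F 0 i * S i) + (fun F => \sum_(j <- s) F 0 j * S j).
  by apply/funext => F; rewrite big_cons.
have h1 : (fun F : 'rV[R]_m => F 0 i) @ x --> x 0 i := @coord_continuous R 1 m 0 i x.
have h2 : (fun F : 'rV[R]_m => S i) @ x --> S i := @cst_continuous _ _ (S i) x.
exact: (cvgD (cvgM h1 h2) (IH x)).
Qed.

Lemma sum_if_eq (c : nat -> R) j0 : (j0 < m)%N ->
  \sum_(i < m) (if (i : nat) == j0 then c i else 0) = c j0.
Proof.
move=> j0m; rewrite (bigD1 (Ordinal j0m)) //= eqxx big1 ?addr0 // => i.
by move=> /negbTE; rewrite -val_eqE /= => ->.
Qed.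

Lemma closure_sub_closed (G B : set 'rV[R]_m) : closed B -> G `<=` B -> closure G `<=` B.
Proof.
move=> cB GB x /(closureS GB); by rewrite -(proj1 (closure_id B) cB).
Qed.

Hypothesis n0 : (0 < n)%N.

Lemma main_sec alpha k : 0 <= alpha -> alpha < 1 -> (1 <= k)%N -> (k.+1 < m)%N ->
  exists b : R,
    is_min_mean m n Smin Smax (OmegaTh n (nseq n (S k))) alpha b /\
    Smin * ((1 - alpha) `^ (n%:R^-1)) + S k * (1 - (1 - alpha) `^ (n%:R^-1)) <= b /\
    b <= Smin * ((1 - alpha) `^ (n%:R^-1)) + S k.+1 * (1 - (1 - alpha) `^ (n%:R^-1)).
Proof.
move=> a0 a1 k1 km.
have m0 : (0 < m)%N by apply: ltn_trans km.
set A := (1 - alpha) `^ n%:R^-1.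
have A0 : 0 < A by apply: powR_gt0; rewrite subr_gt0.
have An : A ^+ n = 1 - alpha.
  rewrite -powR_mulrn ?ltW // -powRrM mulVf ?powRr1 //.
    by rewrite subr_ge0 ltW.
  by rewrite pnatr_eq0 -lt0n.
have A1 : A <= 1.
  rewrite leNgt; apply/negP => H.
  have := ltrXn2r n ler01 H; rewrite expr1n An -lt0n n0 => H2.
  lra.
set Om := OmegaTh n (nseq n (S k)).
set G := @Gset R m n Smin Smax Om alpha.
have LB : forall F, G F -> Smin * A + S k * (1 - A) <= @mean R m Smin Smax F.
  move=> F [sF HP].
  set q := \sum_(i : 'I_m | (i < k)%N) F 0 i.
  have q0 : 0 <= q by apply: sumr_ge0 => i _; case: sF.
  have Hq : q ^+ n < 1 - alpha.
    have := @prob_ub F Om (fun i : 'I_m => (i < k)%N) sF (fun d Hd => @notOm k d n0 Hd).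
    move=> H; have := lt_le_trans HP H; rewrite -/q => H3; lra.
  have qA : q < A.
    rewrite ltNge; apply/negP => H.
    have := @lerXn2r R n A q; rewrite !nnegrE => /(_ (ltW A0) q0 H).
    rewrite An => H4; lra.
  have Hmean : Smin * q + S k * (1 - q) <= @mean R m Smin Smax F.
    rewrite /mean.
    have sum1 := sF.2.
    have -> : 1 - q = \sum_(i : 'I_m | ~~ (i < k)%N) F 0 i.
      by rewrite -sum1 (bigID (fun i : 'I_m => (i < k)%N)) /= -/q addrC addrK.
    rewrite [X in _ <= X](bigID (fun i : 'I_m => (i < k)%N)) /= /q !mulr_sumr.
    apply: lerD; apply: ler_sum => i Hi; rewrite mulrC; apply: ler_wpM2l; try by case: sF.
      by have := Sval_le 0 i (leq0n i); rewrite Sval0.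
    by apply: Sval_le; rewrite leqNgt.
  have Sk : Smin < S k by have := Sval_lt 0 k k1; rewrite Sval0.
  have H5 : 0 <= (S k - Smin) * (A - q) by apply: mulr_ge0; rewrite subr_ge0 ltW.
  nra.
pose Fu (u : R) : 'rV[R]_m := \row_(i < m) (if (i : nat) == 0%N then u else if (i : nat) == k.+1 then 1 - u else 0).
have decomp : forall u (g : nat -> R) (i : 'I_m), Fu u 0 i * g i =
    (if (i : nat) == 0%N then u * g i else 0) + (if (i : nat) == k.+1 then (1 - u) * g i else 0).
  move=> u g i; rewrite mxE.
  have [->|h0] := eqVneq (i : nat) 0%N; first by rewrite /= addr0.
  have [->|h1] := eqVneq (i : nat) k.+1; first by rewrite add0r.
  by rewrite mul0r addr0.
have Fu_s : forall u, 0 <= u <= 1 -> simplex (Fu u).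
  move=> u /andP [u0 u1]; split.
    move=> i; rewrite mxE; case: ifP => _ //; case: ifP => _ //; by rewrite subr_ge0.
  transitivity (\sum_(i < m) Fu u 0 i * 1); first by apply: eq_bigr => i _; rewrite mulr1.
  under eq_bigr do rewrite (decomp u (fun=> 1)).
  rewrite big_split /= (@sum_if_eq (fun=> u * 1) 0 m0).
  rewrite [X in _ + X = _](_ : _ = (1 - u) * 1); first lra.
  exact: (@sum_if_eq (fun=> (1 - u) * 1) k.+1 km).
have Fu_mean : forall u, @mean R m Smin Smax (Fu u) = u * Smin + (1 - u) * S k.+1.
  move=> u; rewrite /mean.
  under eq_bigr do rewrite (decomp u S).
  rewrite big_split /= (@sum_if_eq (fun i => u * S i) 0 m0) Sval0.
  congr (_ + _); exact: (@sum_if_eq (fun i => (1 - u) * S i) k.+1 km).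
have Fu_le : forall u, \sum_(i : 'I_m | (i <= k)%N) Fu u 0 i = u.
  move=> u; rewrite big_mkcond.
  transitivity (\sum_(i < m) (if (i : nat) == 0%N then (fun=> u) i else 0)); last exact: (@sum_if_eq (fun=> u) 0 m0).
  apply: eq_bigr => i _; rewrite mxE.
  have [->|h0] := eqVneq (i : nat) 0%N; first by [].
  have [->|h1] := eqVneq (i : nat) k.+1; first by rewrite ltnn.
  by case: ifP.
have Fu_G : forall u, 0 <= u < A -> G (Fu u).
  move=> u /andP [u0 uA].
  have sF : simplex (Fu u) by apply: Fu_s; rewrite u0 /=; apply: ltW; exact: lt_le_trans uA A1.
  split => //.
  have := @prob_lb (Fu u) Om (fun i : 'I_m => (i <= k)%N) sF (fun d Hd => @inOm k d n0 Hd).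
  rewrite Fu_le => H.
  apply: lt_le_trans H.
  have := ltrXn2r n u0 uA; rewrite An -lt0n n0 => H; lra.
set K := @Fset R m n Smin Smax Om alpha.
have K0 : K !=set0.
  exists (Fu 0); apply: subset_closure; apply: Fu_G; by rewrite lexx A0.
have Kb : K `<=` [set x | `|x| <= 1].
  apply: closure_sub_closed.
    apply: (@preimage_closed _ _ (fun x : 'rV[R]_m => `|x|) [set r : R | r <= 1]).
      by move=> x _; apply: norm_continuous.
    exact: closed_le.
  move=> F [sF _] /=.
  rewrite [leLHS]/Num.norm /= mx_normrE.
  apply: bigmax_le => // [[i j]] _ /=.
  rewrite (ord1 i) ger0_norm; last by case: sF.
  by rewrite -sF.2 (bigD1 j) //= lerDl; apply: sumr_ge0 => l _; case: sF.
have Kbd : bounded_set K.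
  exists 1; split; first exact: num_real.
  by move=> M HM x Kx /=; apply: le_trans (Kb x Kx) (ltW HM).
have Kc : compact K := bounded_closed_compact Kbd (@closed_closure _ G).
have cw : {within K, continuous (@mean R m Smin Smax)} := continuous_subspaceT mean_cont.
have [c cK cmin] := EVT_min_rV K0 Kc cw.
exists (@mean R m Smin Smax c).
split; [split|split].
- by exists c; split => //; move: cK; rewrite inE.
- by move=> F KF; apply: cmin; rewrite inE.
- have : K `<=` [set F | Smin * A + S k * (1 - A) <= @mean R m Smin Smax F].
    apply: closure_sub_closed; last exact: LB.
    apply: (@preimage_closed _ _ (@mean R m Smin Smax) [set r : R | Smin * A + S k * (1 - A) <= r]).
      by move=> x _; apply: mean_cont.
    exact: closed_ge.
  by apply; move: cK; rewrite inE.
- apply/ler_addgt0Pr => e e0.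
  have D0 : 0 < S k.+1 - Smin by rewrite subr_gt0; have := Sval_lt 0 k.+1 (ltn0Sn k); rewrite Sval0.
  set t := Num.min A (e / (S k.+1 - Smin)).
  have t0 : 0 < t by rewrite lt_min A0 divr_gt0.
  have tA : t <= A by rewrite ge_min lexx.
  have te : t <= e / (S k.+1 - Smin) by rewrite ge_min lexx orbT.
  have tD : t * (S k.+1 - Smin) <= e.
    have := ler_wpM2r (ltW D0) te; rewrite divfK; [done | by rewrite gt_eqF].
  have : G (Fu (A - t)) by apply: Fu_G; apply/andP; split; lra.
  move=> /(@subset_closure _ G) KF.
  have := cmin (Fu (A - t)); rewrite inE => /(_ KF); rewrite Fu_mean => H.
  lra.
Qed.

End Aux.

Theorem lemma8 (R : realType) (m n : nat) (Smin Smax alpha : R) (k : nat) :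
  (3 <= m)%N -> (1 <= n)%N -> Smin < Smax ->
  0 <= alpha -> alpha < 1 ->
  (1 <= k)%N -> (k <= m - 2)%N ->
  exists b : R,
    is_min_mean m n Smin Smax (OmegaTh n (nseq n (Sval m Smin Smax k))) alpha b /\
    Smin * ((1 - alpha) `^ (n%:R^-1)) + Sval m Smin Smax k * (1 - (1 - alpha) `^ (n%:R^-1)) <= b /\
    b <= Smin * ((1 - alpha) `^ (n%:R^-1)) + Sval m Smin Smax k.+1 * (1 - (1 - alpha) `^ (n%:R^-1)).
Proof.
move=> m3 n1 Sm a0 a1 k1 km.
apply: (@main_sec R m n Smin Smax) => //.
- by apply: leq_trans m3.
- lia.
Qed.
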